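(* Let $G_{\|v_0}$ be an initialized prefix-independent game, let $\epsilon\ge0$, let $\lambda^*$ be the least $\epsilon$-fixed point of the negotiation function of $G$, and let $\xi$ be a play starting in $v_0$. If there exists an $\epsilon$-SPE $\bar\sigma$ in $G_{\|v_0}$ such that $\langle\bar\sigma\rangle_{v_0}=\xi$, then $\xi$ is $\lambda^*$-consistent. Conversely, if $G$ is with steady negotiation and $\xi$ is $\lambda^*$-consistent, then there exists an $\epsilon$-SPE $\bar\sigma$ in $G_{\|v_0}$ with $\langle\bar\sigma\rangle_{v_0}=\xi$.
   Context: A game is a tuple $G=(\Pi,V,(V_i)_{i\in\Pi},E,\mu)$ where $\Pi$ is a finite set of players, $(V,E)$ is a finite directed graph in which every vertex has at least one outgoing edge, $(V_i)_{i\in\Pi}$ is a partition of $V$, and $\mu:V^\omega\to\mathbb{R}^\Pi$ is the outcome function. Plays (infinite paths), histories (finite nonempty paths), strategies, profiles, compatibility and $\langle\bar\sigma\rangle_v$ (the play from $v$ generated by a complete profile) are as usual; $G_{\|v_0}$ is $G$ initialized at $v_0$; $-i$ denotes $\Pi\setminus\{i\}$; for a history $hv$, $\bar\sigma_{\|hv}$ is the profile in $G_{\|v}$ with $\sigma_{j\|hv}(h')=\sigma_j(hh')$. $G$ is prefix-independent if $\mu(h\rho)=\mu(\rho)$ for every history $h$ and play $\rho$. For $\epsilon\ge0$, a profile $\bar\sigma$ in $G_{\|v_0}$ is an $\epsilon$-SPE if for every history $hv$ of $G_{\|v_0}$, every player $i$ and every strategy $\sigma'_i$, $\mu_i(h\langle\bar\sigma_{-i\|hv},\sigma'_{i\|hv}\rangle_v)\le\mu_i(h\langle\bar\sigma_{\|hv}\rangle_v)+\epsilon$.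 A requirement is a map $\lambda:V\to\mathbb{R}\cup\{\pm\infty\}$, ordered pointwise. A play $\rho$ is $\lambda$-consistent if for every $i\in\Pi$ and $n$ with $\rho_n\in V_i$, $\mu_i(\rho_n\rho_{n+1}\cdots)\ge\lambda(\rho_n)$. $\lambda\mathrm{Rat}_i(v)$ is the set of profiles $\bar\sigma_{-i}$ in $G_{\|v}$ for which there exists $\sigma_i$ such that for every history $hw$ from $v$ compatible with $\bar\sigma_{-i}$, $\langle\bar\sigma_{\|hw}\rangle_w$ is $\lambda$-consistent. The negotiation function: for $i\in\Pi$, $v\in V_i$, $\mathrm{nego}(\lambda)(v)=\inf_{\bar\sigma_{-i}\in\lambda\mathrm{Rat}_i(v)}\sup_{\sigma_i}\mu_i(\langle\bar\sigma_{-i},\sigma_i\rangle_v)$, $\inf\emptyset=+\infty$. $\lambda$ is an $\epsilon$-fixed point of $\mathrm{nego}$ if $\lambda(v)-\epsilon\le\mathrm{nego}(\lambda)(v)\le\lambda(v)+\epsilon$ for all $v$ (with $\pm\infty\pm\epsilon=\pm\infty$); a least one exists. $G$ is with steady negotiation if for every player $i$, vertex $v$ and requirement $\lambda$, the set $\{\sup_{\sigma_i}\mu_i(\langle\bar\sigma_{-i},\sigma_i\rangle_v)\mid\bar\sigma_{-i}\in\lambda\mathrm{Rat}_i(v)\}$ is empty or has a minimum. *)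

(* Defs.v *)
From Stdlib Require Import Reals List Arith FinFun.
From Coquelicot Require Import Rbar Lub.
Import ListNotations.
Open Scope R_scope.

Record game := Game {
  Pl : Type;
  V : Type;
  Pl_eq_dec : forall a b : Pl, {a = b} + {a <> b};
  Pl_fin : FinFun.Finite Pl;
  V_fin : FinFun.Finite V;
  owner : V -> Pl;
  E : V -> V -> Prop;
  E_total : forall v, exists w, E v w;
  mu : (nat -> V) -> Pl -> R
}.

Section G.
Variable G : game.

Fixpoint is_path (l : list (V G)) : Prop :=
  match l with
  | x :: ((y :: _) as t) => E G x y /\ is_path t
  | _ => True
  end.

(* (h, v) represents the history h·v (last vertex v); it is a history of
   G_{|v0} when h ++ [v] is a path starting at v0 *)
Definition is_hist (v0 : V G) (h : list (V G)) (v : V G) : Prop :=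
  is_path (h ++ [v]) /\ hd_error (h ++ [v]) = Some v0.

Definition is_play (rho : nat -> V G) : Prop := forall n, E G (rho n) (rho (S n)).

(* strategies: a strategy of player i maps a history h·v with v in V_i to a
   successor of v (values on other histories are irrelevant) *)
Definition strat := list (V G) -> V G -> V G.
Definition is_strategy (i : Pl G) (s : strat) : Prop :=
  forall h v, owner G v = i -> E G v (s h v).

Definition profile := Pl G -> strat.
Definition is_profile (s : profile) : Prop := forall i, is_strategy i (s i).

(* partial profile sigma_{-i}: a profile whose i-th component is ignored *)
Definition is_profile_minus (i : Pl G) (s : profile) : Prop :=
  forall j, j <> i -> is_strategy j (s j).

Definition upd (s : profile) (i : Pl G) (tau : strat) : profile :=
  fun j => if Pl_eq_dec G j i then tau else s j.

(* the first n+1 vertices of <sigma>_v, as (h, last) *)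
Fixpoint hist (s : profile) (v : V G) (n : nat) : list (V G) * V G :=
  match n with
  | O => ([], v)
  | S n' => let (h, w) := hist s v n' in (h ++ [w], s (owner G w) h w)
  end.

Definition outcome (s : profile) (v : V G) : nat -> V G :=
  fun n => snd (hist s v n).

Definition residual (s : profile) (h : list (V G)) : profile :=
  fun j l w => s j (h ++ l) w.

Definition app_play (h : list (V G)) (rho : nat -> V G) : nat -> V G :=
  fun n => match nth_error h n with
           | Some x => x
           | None => rho (n - length h)%nat
           end.

Definition shift (rho : nat -> V G) (n : nat) : nat -> V G :=
  fun k => rho (n + k)%nat.

Definition prefix_independent : Prop :=
  forall h rho i, mu G (app_play h rho) i = mu G rho i.

Definition is_eps_SPE (eps : R) (v0 : V G) (s : profile) : Prop :=
  is_profile s /\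
  forall h v, is_hist v0 h v ->
  forall i (s' : strat), is_strategy i s' ->
    mu G (app_play h (outcome (residual (upd s i s') h) v)) i
    <= mu G (app_play h (outcome (residual s h) v)) i + eps.

Definition requirement := V G -> Rbar.

Definition consistent (lam : requirement) (rho : nat -> V G) : Prop :=
  forall n, Rbar_le (lam (rho n)) (Finite (mu G (shift rho n) (owner G (rho n)))).

Definition compatible_minus (i : Pl G) (s : profile) (l : list (V G)) : Prop :=
  forall k x y, nth_error l k = Some x -> nth_error l (S k) = Some y ->
    owner G x <> i -> y = s (owner G x) (firstn k l) x.

Definition lamRat (lam : requirement) (i : Pl G) (v : V G) (s : profile) : Prop :=
  is_profile_minus i s /\
  exists tau, is_strategy i tau /\
    forall h w, is_hist v h w -> compatible_minus i s (h ++ [w]) ->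
      consistent lam (outcome (residual (upd s i tau) h) w).

Definition best_resp_val (i : Pl G) (v : V G) (s : profile) : Rbar :=
  Rbar_lub (fun x => exists tau, is_strategy i tau /\
                      x = Finite (mu G (outcome (upd s i tau) v) i)).

Definition nego_set (lam : requirement) (i : Pl G) (v : V G) (x : Rbar) : Prop :=
  exists s, lamRat lam i v s /\ x = best_resp_val i v s.

(* negotiation function (inf of the empty set is +oo) *)
Definition nego (lam : requirement) : requirement :=
  fun v => Rbar_glb (nego_set lam (owner G v) v).

Definition req_le (l1 l2 : requirement) : Prop := forall v, Rbar_le (l1 v) (l2 v).

Definition eps_fixed_point (eps : R) (lam : requirement) : Prop :=
  forall v, Rbar_le (Rbar_minus (lam v) (Finite eps)) (nego lam v) /\
            Rbar_le (nego lam v) (Rbar_plus (lam v) (Finite eps)).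

Definition least_eps_fixed_point (eps : R) (lam : requirement) : Prop :=
  eps_fixed_point eps lam /\
  forall lam', eps_fixed_point eps lam' -> req_le lam lam'.

Definition steady_negotiation : Prop :=
  forall (i : Pl G) (v : V G) (lam : requirement),
    (forall x, ~ nego_set lam i v x) \/
    (exists m, nego_set lam i v m /\ forall x, nego_set lam i v x -> Rbar_le m x).

End G.

(* Main.v *)
Require Import Defs.
From Stdlib Require Import Reals Lra List Arith Lia FunctionalExtensionality ClassicalEpsilon Classical.
From Coquelicot Require Import Rbar Lub.
Import ListNotations.
Open Scope R_scope.

Section S.
Variable G : game.

Definition pref (g : nat -> V G) (n : nat) : list (V G) := map g (seq 0 n).

Lemma pref_S g n : pref g (S n) = pref g n ++ [g n].
Proof. unfold pref. rewrite seq_S, map_app. reflexivity. Qed.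

Lemma pref_length g n : length (pref g n) = n.
Proof. unfold pref. rewrite length_map, length_seq. reflexivity. Qed.

Lemma pref_nth g n k : (k < n)%nat -> nth_error (pref g n) k = Some (g k).
Proof. intros H. unfold pref. rewrite nth_error_map, nth_error_seq.
  destruct (Nat.ltb_spec k n); [|lia]. reflexivity. Qed.

Lemma pref_nth_none g n k : (n <= k)%nat -> nth_error (pref g n) k = None.
Proof. intros H. apply nth_error_None. rewrite pref_length. lia. Qed.

Lemma pref_add g a b : pref g (a + b) = pref g a ++ pref (fun k => g (a + k)%nat) b.
Proof. induction b. simpl. rewrite Nat.add_0_r, app_nil_r. reflexivity.
  rewrite Nat.add_succ_r, !pref_S, IHb, app_assoc. reflexivity.
Qed.

Lemma pref_ext g1 g2 n : (forall k, (k < n)%nat -> g1 k = g2 k) -> pref g1 n = pref g2 n.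
Proof. intros H. unfold pref. apply map_ext_in. intros a Ha. apply in_seq in Ha. apply H. lia. Qed.

Lemma app_play_pref g N : app_play G (pref g N) (shift G g N) = g.
Proof. apply functional_extensionality. intros k. unfold app_play, shift.
  destruct (Nat.ltb_spec k N).
  - rewrite pref_nth by lia. reflexivity.
  - rewrite pref_nth_none by lia. rewrite pref_length. f_equal. lia.
Qed.

Lemma mu_shift (PI : prefix_independent G) g N i : mu G (shift G g N) i = mu G g i.
Proof. rewrite <- (PI (pref g N) (shift G g N) i). rewrite app_play_pref. reflexivity. Qed.

Lemma hist_fst X v n : fst (hist G X v n) = pref (outcome G X v) n.
Proof. induction n; simpl. reflexivity.
  rewrite pref_S. unfold outcome at 2. destruct (hist G X v n) as [h w] eqn:E. simpl in *.
  rewrite IHn. reflexivity. Qed.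

Lemma outcome_S X v n : outcome G X v (S n) =
  X (owner G (outcome G X v n)) (pref (outcome G X v) n) (outcome G X v n).
Proof. unfold outcome at 1. simpl. rewrite <- hist_fst. unfold outcome.
  destruct (hist G X v n) as [h w]. reflexivity. Qed.

Lemma outcome_0 X v : outcome G X v 0 = v.
Proof. reflexivity. Qed.

Definition gplay (Y : profile G) h v := app_play G h (outcome G (residual G Y h) v).

Lemma gplay_ge Y h v m : gplay Y h v (length h + m)%nat = outcome G (residual G Y h) v m.
Proof. unfold gplay, app_play. rewrite (proj2 (nth_error_None h _)) by lia. f_equal. lia. Qed.

Lemma gplay_lt Y h v k : (k < length h)%nat -> nth_error h k = Some (gplay Y h v k).
Proof. intros Hk. unfold gplay, app_play. destruct (nth_error h k) eqn:E. reflexivity.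
  apply nth_error_None in E. lia. Qed.

Lemma gplay_pref0 Y h v : pref (gplay Y h v) (length h) = h.
Proof. apply nth_error_ext. intros k. destruct (Nat.ltb_spec k (length h)).
  - rewrite pref_nth by lia. symmetry. apply gplay_lt; auto.
  - rewrite pref_nth_none by lia. symmetry. apply nth_error_None. lia. Qed.

Lemma gplay_pref Y h v m : pref (gplay Y h v) (length h + m) = h ++ pref (outcome G (residual G Y h) v) m.
Proof. rewrite pref_add, gplay_pref0. f_equal. apply pref_ext. intros k _. apply gplay_ge. Qed.

Lemma gplay_len Y h v : gplay Y h v (length h) = v.
Proof. rewrite <- (Nat.add_0_r (length h)). rewrite gplay_ge. reflexivity. Qed.

Lemma gplay_rec Y h v N : (length h <= N)%nat ->
  gplay Y h v (S N) = Y (owner G (gplay Y h v N)) (pref (gplay Y h v) N) (gplay Y h v N).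
Proof. intros HN. replace N with (length h + (N - length h))%nat by lia.
  replace (S (length h + (N - length h))) with (length h + S (N - length h))%nat by lia.
  rewrite !gplay_ge, gplay_pref, outcome_S. reflexivity. Qed.

Lemma rec_unique (F : list (V G) -> V G -> V G) g1 g2 n0 :
  (forall k, (k <= n0)%nat -> g1 k = g2 k) ->
  (forall N, (n0 <= N)%nat -> g1 (S N) = F (pref g1 N) (g1 N)) ->
  (forall N, (n0 <= N)%nat -> g2 (S N) = F (pref g2 N) (g2 N)) ->
  forall k, g1 k = g2 k.
Proof. intros H0 H1 H2.
  assert (forall N k, (k <= N)%nat -> g1 k = g2 k).
  { induction N; intros k Hk.
    - apply H0. lia.
    - destruct (Nat.leb_spec k N). apply IHN; auto.
      assert (k = S N) by lia. subst.
      destruct (Nat.leb_spec (S N) n0). apply H0; auto.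
      rewrite H1, H2 by lia. f_equal. apply pref_ext. intros; apply IHN; lia. apply IHN; lia. }
  intros k. apply (H k k). lia. Qed.

Lemma is_path_nth l : is_path G l <-> forall k x y, nth_error l k = Some x -> nth_error l (S k) = Some y -> E G x y.
Proof. induction l as [|a l IH].
  - split. intros _ k x y H. destruct k; discriminate. intros; exact I.
  - destruct l as [|b l].
    + split. intros _ k x y _ H. destruct k as [|[|k]]; simpl in H; discriminate. intros; exact I.
    + change (is_path G (a :: b :: l)) with (E G a b /\ is_path G (b :: l)). split.
      * intros [Hab Hp] k x y Hx Hy. destruct k.
        -- simpl in Hx, Hy. inversion Hx; inversion Hy; subst; auto.
        -- exact (proj1 IH Hp k x y Hx Hy).
      * intros H. split. apply (H 0%nat); reflexivity. apply IH. intros k x y Hx Hy.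
        apply (H (S k)); auto.
Qed.

Lemma hist_pref u g N : g 0%nat = u -> (forall k, (k < N)%nat -> E G (g k) (g (S k))) ->
  is_hist G u (pref g N) (g N).
Proof. intros H0 HE. unfold is_hist. rewrite <- pref_S. split.
  - apply is_path_nth. intros k x y Hx Hy.
    destruct (Nat.ltb_spec (S k) (S N)).
    + rewrite pref_nth in Hx by lia. rewrite pref_nth in Hy by lia.
      inversion Hx; inversion Hy; subst. apply HE. lia.
    + rewrite pref_nth_none in Hy by lia. discriminate.
  - unfold pref. simpl. rewrite H0. reflexivity.
Qed.

Lemma gplay_presv Y h v : pref (gplay Y h v) (S (length h)) = h ++ [v].
Proof. rewrite pref_S, gplay_pref0, gplay_len. reflexivity. Qed.

Lemma gplay_0 Y u h v : is_hist G u h v -> gplay Y h v 0%nat = u.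
Proof. intros [_ Hd]. rewrite <- gplay_presv with (Y := Y) in Hd. unfold pref in Hd. simpl in Hd.
  inversion Hd. reflexivity. Qed.

Lemma gplay_edges_lt Y u h v : is_hist G u h v -> forall k, (k < length h)%nat ->
  E G (gplay Y h v k) (gplay Y h v (S k)).
Proof. intros [Hp _] k Hk. rewrite <- gplay_presv with (Y := Y) in Hp.
  eapply (proj1 (is_path_nth _) Hp k); apply pref_nth; lia. Qed.

Definition valid (Y : profile G) := forall H x, E G x (Y (owner G x) H x).

Lemma gplay_edges Y u h v : is_hist G u h v -> valid Y -> forall k,
  E G (gplay Y h v k) (gplay Y h v (S k)).
Proof. intros Hh Hv k. destruct (Nat.ltb_spec k (length h)).
  - eapply gplay_edges_lt; eauto.
  - rewrite gplay_rec by lia. apply Hv. Qed.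

Lemma gplay_hist Y u h v : is_hist G u h v -> valid Y -> forall N,
  is_hist G u (pref (gplay Y h v) N) (gplay Y h v N).
Proof. intros Hh Hv N. apply hist_pref. eapply gplay_0; eauto.
  intros k _. eapply gplay_edges; eauto. Qed.

Lemma gplay_suffix Y h v N : (length h <= N)%nat -> forall m,
  outcome G (residual G Y (pref (gplay Y h v) N)) (gplay Y h v N) m = gplay Y h v (N + m).
Proof. intros HN m. set (g := gplay Y h v).
  assert (Hg : forall k, gplay Y (pref g N) (g N) k = g k).
  { apply (rec_unique (fun H x => Y (owner G x) H x) _ _ N).
    - intros k Hk. destruct (Nat.eqb_spec k N).
      + subst k. pose proof (gplay_len Y (pref g N) (g N)) as E1. rewrite pref_length in E1. exact E1.
      + assert (E1 := gplay_lt Y (pref g N) (g N) k). rewrite pref_length in E1.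
        rewrite pref_nth in E1 by lia. assert (k < N)%nat by lia. specialize (E1 H). inversion E1. reflexivity.
    - intros M HM. rewrite gplay_rec; auto. rewrite pref_length; auto.
    - intros M HM. unfold g. rewrite gplay_rec; auto. lia. }
  pose proof (gplay_ge Y (pref g N) (g N) m) as Hm. rewrite pref_length in Hm. rewrite <- Hm. apply Hg.
Qed.

Definition profile_ok (s : profile G) := is_profile G s.

Lemma valid_profile s : is_profile G s -> valid s.
Proof. intros Hs H x. apply (Hs (owner G x)). reflexivity. Qed.

Lemma valid_upd s i t : is_profile G s -> is_strategy G i t -> valid (upd G s i t).
Proof. intros Hs Ht H x. unfold upd. destruct (Pl_eq_dec G (owner G x) i).
  - apply Ht. auto.
  - apply (Hs (owner G x)). reflexivity. Qed.

Lemma skipn_len_app {A} (h l : list A) : skipn (length h) (h ++ l) = l.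
Proof. induction h; simpl; auto. Qed.

Lemma lub_ub E x : E x -> Rbar_le x (Rbar_lub E).
Proof. intros H. exact (proj1 (proj2_sig (Rbar_ex_lub E)) x H). Qed.
Lemma lub_least E b : (forall x, E x -> Rbar_le x b) -> Rbar_le (Rbar_lub E) b.
Proof. intros H. exact (proj2 (proj2_sig (Rbar_ex_lub E)) b H). Qed.
Lemma glb_lb E x : E x -> Rbar_le (Rbar_glb E) x.
Proof. intros H. exact (proj1 (proj2_sig (Rbar_ex_glb E)) x H). Qed.
Lemma glb_greatest E b : (forall x, E x -> Rbar_le b x) -> Rbar_le b (Rbar_glb E).
Proof. intros H. exact (proj2 (proj2_sig (Rbar_ex_glb E)) b H). Qed.

Lemma hist_nil v : is_hist G v [] v.
Proof. split; simpl; auto. Qed.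

Lemma compat_single i s v : compatible_minus G i s [v].
Proof. intros k x y _ Hy. destruct k; simpl in Hy; discriminate. Qed.

Lemma nego_ge lam v : Rbar_le (lam v) (nego G lam v).
Proof. unfold nego. apply glb_greatest. intros x [s [[Hs [tau [Ht Hc]]] ->]].
  specialize (Hc [] v (hist_nil v) (compat_single _ _ _) 0%nat).
  eapply Rbar_le_trans. exact Hc. unfold best_resp_val. apply lub_ub. exists tau. split; auto.
Qed.

Lemma minus_le x e : 0 <= e -> Rbar_le (Rbar_minus x (Finite e)) x.
Proof. intros He. destruct x; simpl; auto. lra. Qed.

Lemma glb_plus_ge (Ex : Rbar -> Prop) a e :
  (forall x, Ex x -> Rbar_le a (Rbar_plus x (Finite e))) -> Rbar_le a (Rbar_plus (Rbar_glb Ex) (Finite e)).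
Proof. intros H. destruct a as [r| |]; [| |simpl; auto].
  - assert (Rbar_le (Finite (r - e)) (Rbar_glb Ex)).
    { apply glb_greatest. intros x Hx. specialize (H x Hx). destruct x; simpl in *; auto. lra. }
    destruct (Rbar_glb Ex); simpl in *; auto. lra.
  - assert (Rbar_le p_infty (Rbar_glb Ex)).
    { apply glb_greatest. intros x Hx. specialize (H x Hx). destruct x; simpl in *; auto. }
    destruct (Rbar_glb Ex); simpl in *; auto.
Qed.

Lemma path_join l1 x l2 : is_path G (l1 ++ [x]) -> is_path G (x :: l2) -> is_path G (l1 ++ x :: l2).
Proof. induction l1 as [|a l1 IH]; simpl; auto.
  destruct l1 as [|b l1]; simpl.
  - intros [H1 _] H2. split; auto.
  - intros [H1 H3] H2. split; auto. apply IH; auto.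
Qed.

Lemma hist_join u h w h' w' : is_hist G u h w -> is_hist G w h' w' -> is_hist G u (h ++ h') w'.
Proof. intros [P1 D1] [P2 D2]. destruct h' as [|a t].
  - simpl in D2. inversion D2. subst. rewrite app_nil_r. split; auto.
  - simpl in D2. inversion D2; subst. split.
    + rewrite <- app_assoc. simpl. apply path_join; auto.
    + destruct h; simpl in *; auto.
Qed.

Lemma gplay_nil Y v k : gplay Y [] v k = outcome G Y v k.
Proof. exact (gplay_ge Y [] v k). Qed.

Section Dir1.
Variable eps : R.
Hypothesis PI : prefix_independent G.
Hypothesis Heps : 0 <= eps.

Definition XS (w : V G) (x : Rbar) : Prop :=
  exists u s h, is_eps_SPE G eps u s /\ is_hist G u h w /\
    x = Finite (mu G (outcome G (residual G s h) w) (owner G w)).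

Definition lamSPE : requirement G := fun w => Rbar_glb (XS w).

Lemma residual_app Y h h' : residual G (residual G Y h) h' = residual G Y (h ++ h').
Proof. unfold residual. do 3 (apply functional_extensionality; intro). rewrite app_assoc. reflexivity. Qed.

Lemma upd_self Y d : upd G Y d (Y d) = Y.
Proof. unfold upd. apply functional_extensionality; intro j. destruct (Pl_eq_dec G j d); subst; auto. Qed.

Lemma SPE_cons u s h w : is_eps_SPE G eps u s -> is_hist G u h w ->
  consistent G lamSPE (outcome G (residual G s h) w).
Proof. intros Hs Hh n. set (g := gplay s h w).
  assert (Hv : valid s) by (apply valid_profile; apply Hs).
  assert (E1 : outcome G (residual G s h) w n = g (length h + n)%nat) by (unfold g; rewrite gplay_ge; auto).
  assert (E2 : shift G (outcome G (residual G s h) w) n =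
     outcome G (residual G s (pref g (length h + n))) (g (length h + n)%nat)).
  { apply functional_extensionality. intro k. unfold shift, g. rewrite gplay_suffix by lia.
    rewrite <- gplay_ge. f_equal. lia. }
  rewrite E2, E1. apply glb_lb. exists u, s, (pref g (length h + n)). split; auto. split; auto.
  unfold g. apply (gplay_hist s u h w Hh Hv).
Qed.

Lemma best_SPE u s h w : is_eps_SPE G eps u s -> is_hist G u h w ->
  Rbar_le (best_resp_val G (owner G w) w (residual G s h))
    (Finite (mu G (outcome G (residual G s h) w) (owner G w) + eps)).
Proof. intros [Hp Hs] Hh. apply lub_least. intros x [tau [Ht ->]]. simpl.
  set (d := owner G w).
  set (s' := fun l x => tau (skipn (length h) l) x).
  assert (Hs' : is_strategy G d s') by (intros l x Hx; apply Ht; auto).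
  specialize (Hs h w Hh d s' Hs'). rewrite !PI in Hs.
  replace (upd G (residual G s h) d tau) with (residual G (upd G s d s') h). exact Hs.
  unfold residual, upd, s'. do 3 (apply functional_extensionality; intro).
  destruct (Pl_eq_dec G x d); auto. rewrite skipn_len_app. reflexivity.
Qed.

Lemma lamSPE_fixed : eps_fixed_point G eps lamSPE.
Proof. intros w. split.
  - eapply Rbar_le_trans. apply minus_le; auto. apply nego_ge.
  - apply glb_plus_ge. intros x [u [s [h [Hs [Hh ->]]]]].
    eapply Rbar_le_trans. 2: apply (best_SPE u s h w Hs Hh).
    unfold nego. apply glb_lb. exists (residual G s h). split; auto.
    split.
    + intros j _ l x Hx. apply (proj1 Hs j). auto.
    + exists (residual G s h (owner G w)). split.
      * intros l x Hx. apply (proj1 Hs). auto.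
      * intros h' w' Hh' _. rewrite upd_self, residual_app. eapply SPE_cons; eauto.
        eapply hist_join; eauto.
Qed.

End Dir1.

Lemma skipn_app_le {A} o (h r : list A) : (o <= length h)%nat -> skipn o (h ++ r) = skipn o h ++ r.
Proof. intros H. rewrite skipn_app. replace (o - length h)%nat with 0%nat by lia. reflexivity. Qed.

Lemma firstn_len_app {A} (l r : list A) : firstn (length l) (l ++ r) = l.
Proof. induction l; simpl; auto. rewrite IHl. auto. Qed.

Lemma firstn_le_app {A} k (l r : list A) : (k <= length l)%nat -> firstn k (l ++ r) = firstn k l.
Proof. intros H. rewrite firstn_app. replace (k - length l)%nat with 0%nat by lia. simpl. apply app_nil_r. Qed.

Lemma compat_snoc d (sg : profile G) l w y : compatible_minus G d sg (l ++ [w]) ->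
  (owner G w <> d -> y = sg (owner G w) l w) -> compatible_minus G d sg (l ++ [w; y]).
Proof. intros Hc Hy k x z Hx Hz Ho.
  destruct (Nat.ltb_spec k (length l)).
  - rewrite nth_error_app1 in Hx by lia. 
    assert (Hz' : nth_error (l ++ [w]) (S k) = Some z).
    { destruct (Nat.ltb_spec (S k) (length l)).
      - rewrite nth_error_app1 in Hz |- * by lia. auto.
      - rewrite nth_error_app2 in Hz |- * by lia. replace (S k - length l)%nat with 0%nat in * by lia.
        simpl in *. auto. }
    rewrite (Hc k x z) by (try rewrite nth_error_app1 by lia; auto).
    rewrite firstn_le_app by lia. rewrite (firstn_le_app k l [w; y]) by lia. reflexivity.
  - rewrite nth_error_app2 in Hx, Hz by lia.
    destruct (Nat.eqb_spec k (length l)).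
    + subst k. rewrite Nat.sub_diag in Hx. replace (S (length l) - length l)%nat with 1%nat in Hz by lia.
      simpl in Hx, Hz. inversion Hx; inversion Hz; subst. rewrite firstn_len_app. auto.
    + replace (S k - length l)%nat with (S (S (k - length l - 1))) in Hz by lia. simpl in Hz.
      destruct (k - length l - 1)%nat; discriminate.
Qed.

Lemma Rbar_lt_irr x : ~ Rbar_lt x x.
Proof. destruct x; simpl; auto. lra. Qed.

Lemma hist_snoc_inv u h w' w : is_hist G u (h ++ [w']) w -> is_hist G u h w' /\ E G w' w.
Proof. intros [Hp Hd]. rewrite is_path_nth in Hp. split; [split|].
  - apply is_path_nth. intros k x y Hx Hy. apply (Hp k); rewrite nth_error_app1; auto;
    apply nth_error_Some; congruence.
  - destruct h; simpl in *; auto.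
  - apply (Hp (length h)).
    + rewrite <- app_assoc. rewrite nth_error_app2 by lia. rewrite Nat.sub_diag. reflexivity.
    + rewrite <- app_assoc. rewrite nth_error_app2 by lia.
      replace (S (length h) - length h)%nat with 1%nat by lia. reflexivity.
Qed.

Lemma skipn_path l o : is_path G l -> is_path G (skipn o l).
Proof. rewrite !is_path_nth. intros H k x y Hx Hy. rewrite nth_error_skipn in Hx, Hy.
  apply (H (o + k)%nat); auto. rewrite <- Nat.add_succ_r. auto. Qed.

Lemma skipn_hd {A} o (l : list A) : hd_error (skipn o l) = nth_error l o.
Proof. revert l; induction o; destruct l; simpl; auto. Qed.

Section Dir2.
Variable eps : R.
Variable lam : requirement G.
Variable xi : nat -> V G.
Variable v0 : V G.
Hypothesis PI : prefix_independent G.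
Hypothesis Heps : 0 <= eps.
Hypothesis Hfix : eps_fixed_point G eps lam.
Hypothesis Hxi : is_play G xi.
Hypothesis Hx0 : xi 0%nat = v0.
Hypothesis Hsteady : steady_negotiation G.
Hypothesis Hcons : consistent G lam xi.

Definition dflt (w : V G) : V G := proj1_sig (constructive_indefinite_description _ (E_total G w)).
Lemma dflt_ok w : E G w (dflt w).
Proof. unfold dflt. destruct (constructive_indefinite_description _ _). auto. Qed.

Definition pun_spec (u : V G) (p : profile G * strat G) : Prop :=
  let d := owner G u in is_profile_minus G d (fst p) /\ is_strategy G d (snd p) /\
  (forall h w, is_hist G u h w -> compatible_minus G d (fst p) (h ++ [w]) ->
     consistent G lam (outcome G (residual G (upd G (fst p) d (snd p)) h) w)) /\
  (forall x, nego_set G lam d u x -> Rbar_le (best_resp_val G d u (fst p)) x).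

Definition pun (u : V G) : profile G * strat G :=
  match excluded_middle_informative (exists p, pun_spec u p) with
  | left H => proj1_sig (constructive_indefinite_description _ H)
  | right _ => (fun _ _ x => x, fun _ x => x)
  end.

Lemma pun_ok u : (exists p, pun_spec u p) -> pun_spec u (pun u).
Proof. intros H. unfold pun. destruct (excluded_middle_informative _) as [H'|H'].
  - destruct (constructive_indefinite_description _ _). auto.
  - contradiction. Qed.

Lemma glb_empty (Ex : Rbar -> Prop) : Rbar_lt (Rbar_glb Ex) p_infty -> exists x, Ex x.
Proof. intros H. apply NNPP. intros Hn. apply (Rbar_lt_irr p_infty).
  eapply Rbar_le_lt_trans. 2: exact H. apply glb_greatest. intros x Hx. exfalso. apply Hn. eauto. Qed.

Lemma pun_exists u : Rbar_lt (nego G lam u) p_infty -> exists p, pun_spec u p.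
Proof. intros H. apply glb_empty in H.
  destruct (Hsteady (owner G u) u lam) as [He|[m [Hm Hmin]]].
  - destruct H as [x Hx]. exfalso. apply (He x Hx).
  - destruct Hm as [sg [[Hp [tau [Ht Hc]]] ->]]. exists (sg, tau). repeat split; simpl; auto.
Qed.

Lemma pun_value u : pun_spec u (pun u) -> best_resp_val G (owner G u) u (fst (pun u)) = nego G lam u.
Proof. intros [H1 [H2 [H3 H4]]]. apply Rbar_le_antisym.
  - unfold nego. apply glb_greatest. auto.
  - unfold nego. apply glb_lb. exists (fst (pun u)). split; auto. split; auto. exists (snd (pun u)). auto.
Qed.

Definition PP (u : V G) : profile G := upd G (fst (pun u)) (owner G u) (snd (pun u)).

Inductive St := Follow | Pun (u : V G) (off : nat).

Definition prof (st : St) : profile G :=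
  match st with Follow => fun _ l _ => xi (S (length l)) | Pun u _ => PP u end.
Definition offs (st : St) : nat := match st with Follow => 0%nat | Pun _ o => o end.
Definition rec (st : St) (h : list (V G)) (w : V G) : V G := prof st (owner G w) (skipn (offs st) h) w.

Definition trans (st : St) (h : list (V G)) (w y : V G) : St :=
  if excluded_middle_informative (y = rec st h w) then st else
  match st with
  | Pun u o => if Pl_eq_dec G (owner G u) (owner G w) then
                 (if Rbar_lt_dec (nego G lam w) (nego G lam u) then Pun w (length h) else st)
               else Pun w (length h)
  | Follow => Pun w (length h)
  end.

Fixpoint stR (rh : list (V G)) (w : V G) : St :=
  match rh with [] => Follow | w' :: rh' => trans (stR rh' w') (rev rh') w' w end.
Definition st (h : list (V G)) (w : V G) : St := stR (rev h) w.

Lemma st_snoc h w' w : st (h ++ [w']) w = trans (st h w') h w' w.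
Proof. unfold st. rewrite rev_app_distr. simpl. rewrite rev_involutive. reflexivity. Qed.

Lemma st_nil w : st [] w = Follow.
Proof. reflexivity. Qed.

Definition act (h : list (V G)) (w : V G) : V G :=
  let r := rec (st h w) h w in
  if excluded_middle_informative (E G w r) then r else dflt w.

Definition sig : profile G := fun _ => act.

Lemma sig_act j H x : sig j H x = act H x.
Proof. reflexivity. Qed.

Lemma sig_valid : valid sig.
Proof. intros H x. unfold sig, act. destruct (excluded_middle_informative _); auto. apply dflt_ok. Qed.

Lemma sig_profile : is_profile G sig.
Proof. intros j H x _. apply sig_valid. Qed.

Definition Inv (h : list (V G)) (w : V G) : Prop :=
  is_hist G v0 h w /\
  match st h w with
  | Follow => h ++ [w] = pref xi (S (length h))
  | Pun u o => (o <= length h)%nat /\ nth_error (h ++ [w]) o = Some u /\ pun_spec u (pun u) /\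
               compatible_minus G (owner G u) (fst (pun u)) (skipn o (h ++ [w]))
  end.

Lemma PP_valid u : pun_spec u (pun u) -> forall H x, E G x (PP u (owner G x) H x).
Proof. intros [H1 [H2 _]] H x. unfold PP, upd. destruct (Pl_eq_dec G (owner G x) (owner G u)).
  - apply H2; auto.
  - apply (H1 (owner G x)); auto. Qed.

Lemma pref_last g n h w : h ++ [w] = pref g (S n) -> w = g n.
Proof. intros H. rewrite pref_S in H. apply app_inj_tail in H. destruct H; auto. Qed.

Lemma pref_len g n h w : h ++ [w] = pref g (S n) -> length h = n.
Proof. intros H. apply (f_equal (@length _)) in H. rewrite length_app, pref_length in H. simpl in H. lia. Qed.

Lemma inv_rec h w : Inv h w -> E G w (rec (st h w) h w).
Proof. intros [Hh Hs]. destruct (st h w) as [|u o].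
  - unfold rec. simpl. rewrite (pref_last _ _ _ _ Hs). apply Hxi.
  - unfold rec. simpl. apply PP_valid. apply Hs. Qed.

Lemma inv_act h w : Inv h w -> act h w = rec (st h w) h w.
Proof. intros Hi. unfold act. destruct (excluded_middle_informative _); auto.
  exfalso. apply n. apply inv_rec; auto. Qed.

Definition Lplan h w := outcome G (residual G (prof (st h w)) (skipn (offs (st h w)) h)) w.

Lemma follow_outcome h m : outcome G (residual G (prof Follow) h) (xi (length h)) m = xi (length h + m)%nat.
Proof. induction m. rewrite Nat.add_0_r. reflexivity.
  rewrite outcome_S. unfold residual. simpl. rewrite length_app, pref_length. f_equal. lia. Qed.

Lemma inv_cons h w : Inv h w -> consistent G lam (Lplan h w).
Proof. intros [Hh Hs]. unfold Lplan. destruct (st h w) as [|u o].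
  - change (skipn (offs Follow) h) with h. pose proof (pref_last _ _ _ _ Hs) as Hw. pose proof (pref_len _ _ _ _ Hs) as Hl.
    subst w. intros n. rewrite follow_outcome.
    replace (shift G (outcome G (residual G (prof Follow) h) (xi (length h))) n) with (shift G xi (length h + n)).
    apply Hcons. apply functional_extensionality. intro k. unfold shift. rewrite follow_outcome. f_equal. lia.
  - destruct Hs as [Ho [Hu [Hsp Hc]]]. simpl. apply Hsp.
    + split.
      * rewrite <- skipn_app_le by auto. apply skipn_path. apply Hh.
      * rewrite <- skipn_app_le by auto. rewrite skipn_hd. auto.
    + rewrite <- skipn_app_le by auto. auto.
Qed.

Lemma inv_lam h w : Inv h w -> Rbar_le (lam w) (Finite (mu G (Lplan h w) (owner G w))).
Proof. intros Hi. exact (inv_cons h w Hi 0%nat). Qed.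

Lemma nego_fin w m : Rbar_le (lam w) (Finite m) -> Rbar_le (nego G lam w) (Finite (m + eps)).
Proof. intros H. eapply Rbar_le_trans. apply (Hfix w). replace (Finite (m + eps)) with (Rbar_plus (Finite m) (Finite eps)) by reflexivity.
  apply Rbar_plus_le_compat; auto. apply Rbar_le_refl. Qed.

Lemma hist_one w y : E G w y -> is_hist G w [w] y.
Proof. intros H. split. simpl. split; auto. reflexivity. Qed.

Lemma restart_ok h w y : Inv h w -> E G w y ->
  (length h <= length (h ++ [w]))%nat /\ nth_error ((h ++ [w]) ++ [y]) (length h) = Some w /\
  pun_spec w (pun w) /\ compatible_minus G (owner G w) (fst (pun w)) (skipn (length h) ((h ++ [w]) ++ [y])).
Proof. intros Hi Hy. split; [|split; [|split]].
  - rewrite length_app. lia.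
  - rewrite <- app_assoc. rewrite nth_error_app2 by lia. rewrite Nat.sub_diag. reflexivity.
  - apply pun_ok. apply pun_exists. eapply Rbar_le_lt_trans. apply nego_fin. apply (inv_lam h w Hi). simpl. auto.
  - rewrite <- app_assoc. rewrite skipn_len_app. intros k x z Hx Hz Ho.
    destruct k as [|[|k]]; simpl in Hx, Hz; try discriminate. inversion Hx. subst. contradiction.
Qed.

Lemma inv_step h w y : Inv h w -> E G w y -> Inv (h ++ [w]) y.
Proof. intros Hi Hy. pose proof Hi as [Hh Hs]. split.
  { eapply hist_join; eauto. apply hist_one; auto. }
  rewrite st_snoc. unfold trans. destruct (st h w) as [|u o] eqn:Est.
  - destruct (excluded_middle_informative _) as [Er|Er].
    + unfold rec in Er. simpl in Er. rewrite length_app. simpl. rewrite Nat.add_1_r, pref_S, <- Hs, Er.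
      reflexivity.
    + apply restart_ok; auto.
  - destruct Hs as [Ho [Hu [Hsp Hc]]].
    assert (Keep : (owner G w <> owner G u -> y = fst (pun u) (owner G w) (skipn o h) w) ->
      (o <= length (h ++ [w]))%nat /\ nth_error ((h ++ [w]) ++ [y]) o = Some u /\ pun_spec u (pun u) /\
      compatible_minus G (owner G u) (fst (pun u)) (skipn o ((h ++ [w]) ++ [y]))).
    { intros Hyy. split; [|split; [|split]]; auto.
      - rewrite length_app. lia.
      - rewrite nth_error_app1; auto. rewrite length_app. simpl. lia.
      - rewrite <- app_assoc, skipn_app_le by auto. rewrite skipn_app_le in Hc by auto.
        apply compat_snoc; auto. }
    destruct (excluded_middle_informative _) as [Er|Er].
    + apply Keep. intros Hn. rewrite Er. unfold rec. simpl. unfold PP, upd.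
      destruct (Pl_eq_dec G (owner G w) (owner G u)); [contradiction|auto].
    + destruct (Pl_eq_dec G (owner G u) (owner G w)).
      * destruct (Rbar_lt_dec (nego G lam w) (nego G lam u)). apply restart_ok; auto. apply Keep. intros; congruence.
      * apply restart_ok; auto.
Qed.

Lemma inv_all h w : is_hist G v0 h w -> Inv h w.
Proof. revert w. induction h as [|w' h IH] using rev_ind; intros w Hh.
  - destruct Hh as [_ Hd]. simpl in Hd. inversion Hd; subst. split. apply hist_nil.
    rewrite st_nil. simpl. unfold pref. simpl. rewrite Hx0. reflexivity.
  - apply hist_snoc_inv in Hh. destruct Hh as [Hh He]. apply inv_step; auto.
Qed.

Lemma inv_off h w : Inv h w -> (offs (st h w) <= length h)%nat.
Proof. intros [_ Hs]. destruct (st h w); simpl; [lia|apply Hs]. Qed.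

Lemma plan_states h w : Inv h w -> forall m,
  Inv (pref (gplay sig h w) (length h + m)) (gplay sig h w (length h + m)) /\
  st (pref (gplay sig h w) (length h + m)) (gplay sig h w (length h + m)) = st h w.
Proof. intros Hi m. set (g := gplay sig h w). induction m.
  - rewrite Nat.add_0_r. unfold g. rewrite gplay_pref0, gplay_len. auto.
  - destruct IHm as [I1 I2]. rewrite Nat.add_succ_r, pref_S.
    assert (Hg : g (S (length h + m))%nat = rec (st h w) (pref g (length h + m)%nat) (g (length h + m)%nat)).
    { unfold g. rewrite gplay_rec by lia. fold g. unfold sig. rewrite inv_act by auto. rewrite I2. reflexivity. }
    split.
    + apply inv_step; auto. rewrite Hg, <- I2. apply inv_rec; auto.
    + rewrite st_snoc, I2. unfold trans. destruct (excluded_middle_informative _); auto. contradiction.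
Qed.

Lemma plan_eq h w : Inv h w -> forall k, gplay sig h w k = app_play G h (Lplan h w) k.
Proof. intros Hi. pose proof (inv_off h w Hi) as Ho.
  apply (rec_unique (fun H x => prof (st h w) (owner G x) (skipn (offs (st h w)) H) x) _ _ (length h)).
  - intros k Hk. destruct (Nat.ltb_spec k (length h)).
    + unfold gplay, app_play. destruct (nth_error h k) eqn:E; auto. apply nth_error_None in E. lia.
    + replace k with (length h + 0)%nat by lia. rewrite gplay_ge. unfold app_play.
      rewrite (proj2 (nth_error_None h _)) by lia. replace (length h + 0 - length h)%nat with 0%nat by lia. reflexivity.
  - intros N HN. replace N with (length h + (N - length h))%nat by lia.
    destruct (plan_states h w Hi (N - length h)) as [I1 I2].
    rewrite gplay_rec by lia. rewrite sig_act, inv_act by auto. rewrite I2. reflexivity.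
  - intros N HN. replace N with (length h + (N - length h))%nat by lia. set (m := (N - length h)%nat).
    replace (S (length h + m)) with (length h + S m)%nat by lia.
    assert (A1 : forall r j, app_play G h r (length h + j)%nat = r j).
    { intros r j. unfold app_play. rewrite (proj2 (nth_error_None h _)) by lia. f_equal. lia. }
    assert (A2 : pref (app_play G h (Lplan h w)) (length h + m) = h ++ pref (Lplan h w) m).
    { rewrite pref_add. f_equal.
      - apply nth_error_ext. intros k. destruct (Nat.ltb_spec k (length h)).
        + rewrite pref_nth by auto. unfold app_play. destruct (nth_error h k) eqn:E; auto. apply nth_error_None in E. lia.
        + rewrite pref_nth_none by lia. symmetry. apply nth_error_None. lia.
      - apply pref_ext. intros k _. apply A1. }
    rewrite !A1, A2, skipn_app_le by auto. unfold Lplan at 1. rewrite outcome_S. reflexivity.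
Qed.

Lemma plan_mu h w i : Inv h w -> mu G (gplay sig h w) i = mu G (Lplan h w) i.
Proof. intros Hi. rewrite <- (PI h (Lplan h w) i). f_equal. apply functional_extensionality. apply plan_eq; auto. Qed.

Lemma plan_lam h w : Inv h w -> Rbar_le (lam w) (Finite (mu G (gplay sig h w) (owner G w))).
Proof. intros Hi. rewrite plan_mu by auto. apply inv_lam; auto. Qed.

Lemma gplay_restart Y h w N : (length h <= N)%nat ->
  forall k, gplay Y (pref (gplay Y h w) N) (gplay Y h w N) k = gplay Y h w k.
Proof. intros HN k. unfold gplay at 1.
  replace (outcome G (residual G Y (pref (gplay Y h w) N)) (gplay Y h w N)) with (shift G (gplay Y h w) N).
  rewrite app_play_pref. reflexivity.
  apply functional_extensionality. intro m. rewrite gplay_suffix by auto. reflexivity. Qed.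

Lemma inv_along Y h w : Inv h w -> valid Y -> forall m,
  Inv (pref (gplay Y h w) (length h + m)) (gplay Y h w (length h + m)).
Proof. intros Hi Hv m. induction m.
  - rewrite Nat.add_0_r, gplay_pref0, gplay_len. auto.
  - rewrite Nat.add_succ_r, pref_S. apply inv_step; auto. rewrite gplay_rec by lia. apply Hv. Qed.

Definition lV : list (V G) := proj1_sig (constructive_indefinite_description _ (V_fin G)).
Lemma lV_full x : In x lV.
Proof. unfold lV. destruct (constructive_indefinite_description _ _) as [l Hl]. apply Hl. Qed.

Definition rank (u : V G) : nat :=
  length (filter (fun w => if Rbar_lt_dec (nego G lam w) (nego G lam u) then true else false) lV).

Lemma filter_le {A} (p q : A -> bool) l : (forall x, p x = true -> q x = true) ->
  (length (filter p l) <= length (filter q l))%nat.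
Proof. intros H. induction l; simpl; auto. destruct (p a) eqn:E1; destruct (q a) eqn:E2; simpl; try lia.
  rewrite H in E2 by auto. discriminate. Qed.

Lemma filter_lt {A} (p q : A -> bool) l a : (forall x, p x = true -> q x = true) -> In a l ->
  q a = true -> p a = false -> (length (filter p l) < length (filter q l))%nat.
Proof. intros H Ha Hq Hp. induction l as [|b l IH]; simpl in *. contradiction.
  destruct Ha as [->|Ha].
  - rewrite Hp, Hq. simpl. pose proof (filter_le p q l H). lia.
  - specialize (IH Ha). destruct (p b) eqn:E1; destruct (q b) eqn:E2; simpl; try lia.
    rewrite H in E2 by auto. discriminate. Qed.

Lemma rank_lt u' u : Rbar_lt (nego G lam u') (nego G lam u) -> (rank u' < rank u)%nat.
Proof. intros Hl. unfold rank. apply filter_lt with (a := u').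
  - intros x Hx. destruct (Rbar_lt_dec (nego G lam x) (nego G lam u')) as [H1|H1]; [|discriminate].
    destruct (Rbar_lt_dec (nego G lam x) (nego G lam u)) as [H2|H2]; auto. exfalso. apply H2. eapply Rbar_lt_trans; eauto.
  - apply lV_full.
  - destruct (Rbar_lt_dec (nego G lam u') (nego G lam u)) as [H1|H1]; [reflexivity|]. exfalso. apply H1. exact Hl.
  - destruct (Rbar_lt_dec (nego G lam u') (nego G lam u')) as [H1|]; auto. exfalso. eapply Rbar_lt_irr; eauto.
Qed.

Lemma skipn_pref g o M : (o <= M)%nat -> skipn o (pref g M) = pref (shift G g o) (M - o).
Proof. intros H. replace M with (o + (M - o))%nat at 1 by lia. rewrite pref_add.
  pose proof (skipn_len_app (pref g o) (pref (fun k => g (o + k)%nat) (M - o))) as E1.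
  rewrite pref_length in E1. rewrite E1. reflexivity. Qed.

Lemma firstn_pref g k K : (k <= K)%nat -> firstn k (pref g K) = pref g k.
Proof. intros H. replace K with (k + (K - k))%nat by lia. rewrite pref_add.
  pose proof (firstn_len_app (pref g k) (pref (fun j => g (k + j)%nat) (K - k))) as E1.
  rewrite pref_length in E1. exact E1. Qed.

Section Check.
Variable h : list (V G).
Variable v : V G.
Variable i : Pl G.
Variable s' : strat G.
Hypothesis Hh : is_hist G v0 h v.
Hypothesis Hs' : is_strategy G i s'.

Let Y := upd G sig i s'.
Let gd := gplay Y h v.
Let gp := gplay sig h v.
Let SD N := st (pref gd N) (gd N).

Lemma Y_valid : valid Y.
Proof. apply valid_upd; auto. apply sig_profile. Qed.

Lemma ID N : (length h <= N)%nat -> Inv (pref gd N) (gd N).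
Proof. intros HN. replace N with (length h + (N - length h))%nat by lia. apply inv_along.
  apply inv_all; auto. apply Y_valid. Qed.

Lemma non_i N : (length h <= N)%nat -> owner G (gd N) <> i -> gd (S N) = rec (SD N) (pref gd N) (gd N).
Proof. intros HN Ho. unfold gd. rewrite gplay_rec by auto. fold gd. unfold Y, upd.
  destruct (Pl_eq_dec G _ i); [contradiction|]. rewrite sig_act, inv_act. reflexivity. apply ID; auto. Qed.

Lemma SD_S N : SD (S N) = trans (SD N) (pref gd N) (gd N) (gd (S N)).
Proof. unfold SD. rewrite pref_S, st_snoc. reflexivity. Qed.

Lemma gd_edges k : E G (gd k) (gd (S k)).
Proof. apply (gplay_edges Y v0 h v Hh Y_valid). Qed.

Lemma lemC : forall n u o N, (rank u < n)%nat -> (length h <= N)%nat -> SD N = Pun u o -> owner G u = i ->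
  Rbar_le (Finite (mu G gd i)) (nego G lam u).
Proof. induction n as [|n IHn]; intros u o N Hr HN HS Hou. lia.
  destruct (classic (forall m, SD (N + m)%nat = Pun u o)) as [Hall|Hex].
  - pose proof (ID N HN) as [_ HI]. fold (SD N) in HI. rewrite HS in HI. destruct HI as [Ho [Hu [Hsp _]]].
    rewrite pref_length in Ho. rewrite <- pref_S in Hu. rewrite pref_nth in Hu by lia. inversion Hu as [Hgu].
    set (sg := fst (pun u)).
    set (r := shift G gd o).
    assert (Hcomp : forall m, owner G (r m) <> i -> r (S m) = sg (owner G (r m)) (pref r m) (r m)).
    { intros m Hm.
      pose proof (ID (N + S m)%nat ltac:(lia)) as [_ HI]. fold (SD (N + S m)%nat) in HI.
      rewrite (Hall (S m)) in HI. destruct HI as [_ [_ [_ Hc]]].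
      rewrite <- pref_S, skipn_pref in Hc by lia.
      rewrite <- (firstn_pref r m (S (N + S m) - o)) by lia.
      apply (Hc m (r m) (r (S m))). apply pref_nth; lia. apply pref_nth; lia. rewrite Hou. auto. }
    set (tau := fun (l : list (V G)) (x : V G) =>
      if excluded_middle_informative (x = r (length l) /\ E G x (r (S (length l)))) then r (S (length l)) else dflt x).
    assert (Ht : is_strategy G i tau).
    { intros l x _. unfold tau. destruct (excluded_middle_informative _) as [[-> He]|]; auto. apply dflt_ok. }
    assert (Hout : forall m, outcome G (upd G sg i tau) u m = r m).
    { apply (rec_unique (fun H x => upd G sg i tau (owner G x) H x) _ _ 0%nat).
      - intros k Hk. assert (k = 0%nat) by lia. subst k. unfold r, shift. rewrite Nat.add_0_r. auto.
      - intros M _. apply outcome_S.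
      - intros m _. unfold upd. destruct (Pl_eq_dec G (owner G (r m)) i).
        + unfold tau. rewrite pref_length. destruct (excluded_middle_informative _) as [|Hn]; auto.
          exfalso. apply Hn. split; auto. unfold r, shift. rewrite Nat.add_succ_r. apply gd_edges.
        + apply Hcomp; auto. }
    rewrite <- (mu_shift PI gd o i). fold r.
    rewrite Hgu. rewrite <- (pun_value u Hsp).
    replace (mu G r i) with (mu G (outcome G (upd G sg i tau) u) i).
    2: { f_equal. apply functional_extensionality. auto. }
    apply lub_ub. exists tau. rewrite Hou. split; auto.
  - apply not_all_ex_not in Hex. destruct Hex as [m Hm].
    assert (P : forall m, (forall j, (j <= m)%nat -> SD (N + j)%nat = Pun u o) \/
       exists N' u' o', (length h <= N')%nat /\ SD N' = Pun u' o' /\ owner G u' = i /\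
         Rbar_lt (nego G lam u') (nego G lam u)).
    { induction m0 as [|m0 IH].
      - left. intros j Hj. replace j with 0%nat by lia. rewrite Nat.add_0_r. auto.
      - destruct IH as [IH|IH]; [|right; auto].
        pose proof (SD_S (N + m0)) as ES. rewrite (IH m0 (le_n _)) in ES. unfold trans in ES.
        destruct (excluded_middle_informative _) as [Er|Er].
        + left. intros j Hj. destruct (Nat.eqb_spec j (S m0)).
          * subst j. rewrite Nat.add_succ_r. auto.
          * apply IH. lia.
        + destruct (Pl_eq_dec G (owner G u) (owner G (gd (N + m0)%nat))) as [Eq|Ne].
          * destruct (Rbar_lt_dec _ _) as [Hlt|Hlt].
            -- right. exists (S (N + m0)), (gd (N + m0)%nat), (length (pref gd (N + m0))).
               repeat split; auto. lia. congruence.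
            -- left. intros j Hj. destruct (Nat.eqb_spec j (S m0)).
               ++ subst j. rewrite Nat.add_succ_r. auto.
               ++ apply IH. lia.
          * exfalso. apply Er. rewrite <- (IH m0 (le_n _)). apply non_i. lia. congruence. }
    destruct (P m) as [Hl|[N' [u' [o' [HN' [HS' [Ho' Hlt]]]]]]].
    + exfalso. apply Hm. apply Hl. lia.
    + eapply Rbar_le_trans. apply (IHn u' o' N'); auto. pose proof (rank_lt _ _ Hlt). lia.
      apply Rbar_lt_le; auto.
Qed.

Lemma spe_check : mu G gd i <= mu G gp i + eps.
Proof.
  assert (HI0 : Inv h v) by (apply inv_all; auto).
  pose proof (plan_states h v HI0) as PS. fold gp in PS.
  set (L := fun m => forall j, (j <= m)%nat -> gd (length h + j)%nat = gp (length h + j)%nat /\ SD (length h + j)%nat = st h v).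
  assert (P : forall m, L m \/ exists N u' o', (length h <= N)%nat /\ SD N = Pun u' o' /\ owner G u' = i /\
     Rbar_le (nego G lam u') (Finite (mu G gp i + eps))).
  { induction m as [|m IH].
    - left. intros j Hj. replace j with 0%nat by lia. rewrite Nat.add_0_r. unfold SD, gd, gp.
      rewrite !gplay_len, gplay_pref0. auto.
    - destruct IH as [IH|IH]; [|right; auto].
      set (N := (length h + m)%nat).
      destruct (IH m (le_n _)) as [Eg ES]. fold N in Eg, ES.
      assert (Hpre : pref gd N = pref gp N).
      { apply pref_ext. intros k Hk. destruct (Nat.ltb_spec k (length h)).
        - pose proof (gplay_lt Y h v k H) as E1. pose proof (gplay_lt sig h v k H) as E2.
          fold gd in E1. fold gp in E2. congruence.
        - replace k with (length h + (k - length h))%nat by lia. apply IH. unfold N in Hk. lia. }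
      destruct (PS m) as [IP SP]. fold N in IP, SP.
      assert (Hgp : gp (S N) = rec (st h v) (pref gp N) (gp N)).
      { unfold gp. rewrite gplay_rec by (unfold N; lia). fold gp. rewrite sig_act, inv_act by auto. rewrite SP. auto. }
      pose proof (SD_S N) as ESS. rewrite ES in ESS. unfold trans in ESS.
      destruct (excluded_middle_informative (gd (S N) = rec (st h v) (pref gd N) (gd N))) as [Er|Er].
      + left. intros j Hj. destruct (Nat.eqb_spec j (S m)).
        * subst j. rewrite Nat.add_succ_r. fold N. split; auto. rewrite Er, Hgp, Hpre, Eg. auto.
        * apply IH. lia.
      + assert (Hoi : owner G (gd N) = i).
        { destruct (Pl_eq_dec G (owner G (gd N)) i); auto. exfalso. apply Er.
          rewrite <- ES. apply non_i; auto. unfold N; lia. }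
        assert (Hb : Rbar_le (nego G lam (gd N)) (Finite (mu G gp i + eps))).
        { apply nego_fin. pose proof (plan_lam _ _ IP) as Hl.
          replace (gplay sig (pref gp N) (gp N)) with gp in Hl.
          rewrite <- Eg, Hoi in Hl. exact Hl.
          apply functional_extensionality. intro k. unfold gp. rewrite gplay_restart; auto. unfold N; lia. }
        right. destruct (st h v) as [|u o] eqn:Est.
        { exists (S N), (gd N), (length (pref gd N)). split; [unfold N; lia|]. split; auto. }
        destruct (Pl_eq_dec G (owner G u) (owner G (gd N))) as [Eq|Ne].
        { destruct (Rbar_lt_dec (nego G lam (gd N)) (nego G lam u)) as [Hlt|Hlt].
          - exists (S N), (gd N), (length (pref gd N)). split; [unfold N; lia|]. split; auto.
          - exists (S N), u, o. split; [unfold N; lia|]. split; auto. split. congruence.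
            eapply Rbar_le_trans; [|exact Hb]. apply Rbar_not_lt_le; auto. }
        exists (S N), (gd N), (length (pref gd N)). split; [unfold N; lia|]. split; auto. }
  destruct (classic (forall m, L m)) as [Hall|Hex].
  - replace gd with gp. lra. apply functional_extensionality. intro k.
    destruct (Nat.ltb_spec k (length h)).
    + pose proof (gplay_lt Y h v k H) as E1. pose proof (gplay_lt sig h v k H) as E2.
      fold gd in E1. fold gp in E2. congruence.
    + replace k with (length h + (k - length h))%nat by lia. symmetry. apply (Hall (k - length h)%nat). lia.
  - apply not_all_ex_not in Hex. destruct Hex as [m Hm]. destruct (P m) as [|[N [u' [o' [HN [HS [Ho Hb]]]]]]].
    contradiction.
    pose proof (lemC (S (rank u')) u' o' N ltac:(lia) HN HS Ho) as Hc.
    pose proof (Rbar_le_trans _ _ _ Hc Hb) as Hf. simpl in Hf. exact Hf.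
Qed.

End Check.

Lemma dir2_main : exists s, is_eps_SPE G eps v0 s /\ forall n, outcome G s v0 n = xi n.
Proof. exists sig. split.
  - split. apply sig_profile. intros h v Hh i s' Hs'. apply spe_check; auto.
  - intro n. rewrite <- gplay_nil. rewrite plan_eq by (apply inv_all; apply hist_nil).
    unfold app_play. replace (nth_error (@nil (V G)) n) with (@None (V G)) by (destruct n; reflexivity).
    simpl length. rewrite Nat.sub_0_r. unfold Lplan. change (st [] v0) with Follow.
    change (skipn (offs Follow) (@nil (V G))) with (@nil (V G)). rewrite <- Hx0.
    exact (follow_outcome [] n).
Qed.

End Dir2.

Lemma dir1_main eps lam xi v0 : prefix_independent G -> 0 <= eps -> least_eps_fixed_point G eps lam ->
  is_play G xi -> xi 0%nat = v0 ->
  (exists s : profile G, is_eps_SPE G eps v0 s /\ forall n, outcome G s v0 n = xi n) -> consistent G lam xi.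
Proof. intros PI Heps [_ Hle] Hxi Hx0 [s [Hs Ho]] n.
  assert (Hg : xi = gplay s [] v0).
  { apply functional_extensionality. intro k. rewrite gplay_nil. auto. }
  eapply Rbar_le_trans. apply (Hle (lamSPE eps)). apply lamSPE_fixed; auto.
  apply glb_lb. exists v0, s, (pref xi n). split; auto. split.
  - apply hist_pref; auto.
  - rewrite Hg. f_equal. f_equal. apply functional_extensionality. intro m. unfold shift.
    rewrite gplay_suffix by (simpl; lia). reflexivity.
Qed.

End S.

Theorem theorem2 (G : game) (v0 : V G) (eps : R) (lamstar : requirement G)
  (xi : nat -> V G) :
  prefix_independent G ->
  0 <= eps ->
  least_eps_fixed_point G eps lamstar ->
  is_play G xi -> xi 0%nat = v0 ->
  ((exists s : profile G, is_eps_SPE G eps v0 s /\ forall n, outcome G s v0 n = xi n) ->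
     consistent G lamstar xi) /\
  (steady_negotiation G -> consistent G lamstar xi ->
     exists s : profile G, is_eps_SPE G eps v0 s /\ forall n, outcome G s v0 n = xi n).
Proof.
  intros PI Heps Hl Hxi Hx0. split.
  - apply dir1_main; auto.
  - intros Hs Hc. eapply dir2_main; eauto. apply Hl.
Qed.
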